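(* Let $(X,\phi)$ be a uniformly Lipschitz flow on a compact metric space $(X,d)$, let $L=L(1)$, and let $\mu\in\mathcal{M}(X)$. Then for every $\delta\in(0,1)$ and every $\epsilon>0$, \begin{align*} \overline{h}^K_\mu(\epsilon,\delta,\phi_1)\le\overline{h}^K_\mu(\epsilon,\delta,\phi)\le\overline{h}^K_\mu(\epsilon/L,\delta,\phi_1),\\ \underline{h}^K_\mu(\epsilon,\delta,\phi_1)\le\underline{h}^K_\mu(\epsilon,\delta,\phi)\le\underline{h}^K_\mu(\epsilon/L,\delta,\phi_1). \end{align*}
   Context: A flow: $\phi:X\times\mathbb{R}\to X$ continuous, $\phi_t(x)=\phi(x,t)$, $\phi_0=\mathrm{id}$, $\phi_{t+s}=\phi_t\circ\phi_s$. Uniformly Lipschitz: for every $t_0>0$ there is $L(t_0)>0$ such that for all $\epsilon>0$ and $x,y\in X$, $d(x,y)\le\epsilon/L(t_0)$ implies $d(\phi_sx,\phi_sy)<\epsilon$ for all $s\in[0,t_0]$. $\mathcal{M}(X)$: Borel probability measures on $X$. Balls: $B_t(x,\epsilon,\phi)=\{y:d(\phi_sx,\phi_sy)<\epsilon\ \forall s\in[0,t]\}$, $B_n(x,\epsilon,\phi_1)=\{y:d(\phi_jx,\phi_jy)<\epsilon,\ j=0,\dots,n-1\}$. Katok entropies: $R^\delta_\mu(t,\epsilon,\phi)=\min\{\#E:E\subset X,\ \mu(\bigcup_{x\in E}B_t(x,\epsilon,\phi))>\delta\}$, $\overline{h}^K_\mu(\epsilon,\delta,\phi)=\limsup_{t\to\infty}\frac1t\log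 R^\delta_\mu(t,\epsilon,\phi)$, $\underline{h}^K_\mu(\epsilon,\delta,\phi)=\liminf_{t\to\infty}\frac1t\log R^\delta_\mu(t,\epsilon,\phi)$; $R^\delta_\mu(n,\epsilon,\phi_1)$, $\overline{h}^K_\mu(\epsilon,\delta,\phi_1)$, $\underline{h}^K_\mu(\epsilon,\delta,\phi_1)$ are defined in the same way using $B_n(x,\epsilon,\phi_1)$ and $n\in\mathbb{N}$, $n\to\infty$. *)

(* Defs.v *)
From Stdlib Require List.
From HB Require Import structures.
From mathcomp Require Import all_boot all_order all_algebra.
From mathcomp Require Import all_classical all_reals all_analysis.
Set Implicit Arguments. Unset Strict Implicit. Unset Printing Implicit Defensive.
Import Order.TTheory GRing.Theory Num.Theory numFieldNormedType.Exports.
Local Open Scope classical_set_scope.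
Local Open Scope ring_scope.

Section Defs.
Variables (R : realType) (X : Type).

Definition is_metric (d : X -> X -> R) : Prop :=
  [/\ (forall x y, 0 <= d x y),
      (forall x y, d x y = 0 <-> x = y),
      (forall x y, d x y = d y x) &
      (forall x y z, d x z <= d x y + d y z)].

Definition dopen (d : X -> X -> R) (A : set X) : Prop :=
  forall x, A x -> exists2 e : R, 0 < e & forall y, d x y < e -> A y.

Definition dcompact (d : X -> X -> R) : Prop :=
  forall (I : Type) (U : I -> set X), (forall i, dopen d (U i)) ->
    (forall x, exists i, U i x) ->
    exists s : seq I, forall x, exists i, List.In i s /\ U i x.

(* phi x t = phi_t(x) is a (continuous) flow on (X, d) *)
Definition is_flow (d : X -> X -> R) (phi : X -> R -> X) : Prop :=
  [/\ (forall x t e, 0 < e -> exists2 eta : R, 0 < eta &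
         forall y s, d x y < eta -> `|t - s| < eta -> d (phi x t) (phi y s) < e),
      (forall x, phi x 0 = x) &
      (forall x t s, phi x (t + s) = phi (phi x s) t)].

(* L is a constant L(t0) in the definition of uniformly Lipschitz *)
Definition unif_lip_const (d : X -> X -> R) (phi : X -> R -> X) (t0 L : R) : Prop :=
  0 < L /\ forall (eps : R) x y, 0 < eps -> d x y <= eps / L ->
    forall s, 0 <= s <= t0 -> d (phi x s) (phi y s) < eps.

Definition unif_lipschitz (d : X -> X -> R) (phi : X -> R -> X) : Prop :=
  forall t0 : R, 0 < t0 -> exists L, unif_lip_const d phi t0 L.

Definition bowen_ball_flow (d : X -> X -> R) (phi : X -> R -> X) (t : R) (x : X)
  (eps : R) : set X :=
  [set y | forall s, 0 <= s <= t -> d (phi x s) (phi y s) < eps].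

Definition bowen_ball_time1 (d : X -> X -> R) (phi : X -> R -> X) (n : nat) (x : X)
  (eps : R) : set X :=
  [set y | forall j : nat, (j < n)%N -> d (phi x j%:R) (phi y j%:R) < eps].

End Defs.

Section Katok.
Variables (dX : measure_display) (X : measurableType dX) (R : realType).

Definition borel_for (d : X -> X -> R) : Prop :=
  (@measurable dX X) = <<s dopen d >>.

Definition katokR (mu : probability X R) (B : X -> set X) (delta : R) : R :=
  inf [set (size E)%:R | E in
        [set E : seq X | (delta%:E < mu (\bigcup_(x in [set x | List.In x E]) B x))%E]].

Definition katok_upper_flow (mu : probability X R) (d : X -> X -> R)
  (phi : X -> R -> X) (eps delta : R) : \bar R :=
  limf_esup (fun t : R => (ln (katokR mu (fun x => bowen_ball_flow d phi t x eps) delta) / t)%:E)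
    (pinfty_nbhs R).

Definition katok_lower_flow (mu : probability X R) (d : X -> X -> R)
  (phi : X -> R -> X) (eps delta : R) : \bar R :=
  limf_einf (fun t : R => (ln (katokR mu (fun x => bowen_ball_flow d phi t x eps) delta) / t)%:E)
    (pinfty_nbhs R).

Definition katok_upper_time1 (mu : probability X R) (d : X -> X -> R)
  (phi : X -> R -> X) (eps delta : R) : \bar R :=
  limn_esup (fun n : nat => (ln (katokR mu (fun x => bowen_ball_time1 d phi n x eps) delta) / n%:R)%:E).

Definition katok_lower_time1 (mu : probability X R) (d : X -> X -> R)
  (phi : X -> R -> X) (eps delta : R) : \bar R :=
  limn_einf (fun n : nat => (ln (katokR mu (fun x => bowen_ball_time1 d phi n x eps) delta) / n%:R)%:E).

End Katok.

(* Main.v *)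
Require Import Defs.
From HB Require Import structures.
From mathcomp Require Import all_boot all_order all_algebra.
From mathcomp Require Import all_classical all_reals all_analysis.
From mathcomp Require Import ring lra.
Import Order.TTheory GRing.Theory Num.Theory numFieldNormedType.Exports.
Local Open Scope classical_set_scope.
Local Open Scope ring_scope.
Section LS.
Variables (R : realType) (T1 T2 : choiceType) (X1 : filteredType T1) (X2 : filteredType T2).
Local Open Scope ereal_scope.

Lemma esup_cmp (f : X1 -> \bar R) (g : X2 -> \bar R) F G :
  (forall V, G V -> exists2 U, F U & forall x, U x -> exists2 y, V y & f x <= g y) ->
  limf_esup f F <= limf_esup g G.
Proof.
move=> H; rewrite !limf_esupE; apply: le_ereal_inf_tmp => _ [V GV <-].
have [U FU HU] := H V GV.
apply: le_trans (ereal_inf_lbound _) _; first by exists U.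
apply: ge_ereal_sup => _ [x Ux <-]; have [y Vy fg] := HU x Ux.
by apply: le_trans fg _; apply: ereal_sup_ubound; exists y.
Qed.

Lemma einf_cmp (f : X1 -> \bar R) (g : X2 -> \bar R) F G :
  (forall U, F U -> exists2 V, G V & forall y, V y -> exists2 x, U x & f x <= g y) ->
  limf_einf f F <= limf_einf g G.
Proof.
move=> H; rewrite !limf_einfE; apply: ge_ereal_sup => _ [U FU <-].
have [V GV HV] := H U FU.
apply: le_trans _ (ereal_sup_ubound _); last by exists V.
apply: le_ereal_inf_tmp => _ [y Vy <-]; have [x Ux fg] := HV y Vy.
by apply: le_trans _ fg; apply: ereal_inf_lbound; exists x.
Qed.
End LS.
Section K.
Variables (R : realType) (dX : measure_display) (X : measurableType dX)
  (d : X -> X -> R) (mu : probability X R).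
Hypotheses (hcomp : dcompact d) (hbor : borel_for d).

Lemma dopen_meas A : dopen d A -> measurable A.
Proof. by move=> oA; rewrite hbor; apply: sub_gen_smallest. Qed.

Lemma dopen_bigcup (P : set X) (B : X -> set X) :
  (forall x, dopen d (B x)) -> dopen d (\bigcup_(x in P) B x).
Proof.
move=> oB y [x Px Bxy]; have [e e0 He] := oB x y Bxy.
by exists e => // z dz; exists x => //; apply: He.
Qed.

Lemma katok_ok (B : X -> set X) (delta : R) : (forall x, dopen d (B x)) ->
  (forall x, B x x) -> delta < 1 ->
  exists E : seq X, (delta%:E < mu (\bigcup_(x in [set x | List.In x E]) B x))%E.
Proof.
move=> oB Bxx d1; have [s Hs] := @hcomp X B oB (fun x => ex_intro _ x (Bxx x)).
exists s; suff -> : \bigcup_(x in [set x | List.In x s]) B x = setT.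
  by rewrite probability_setT lte_fin.
apply/seteqP; split => // y _; have [i [Hi Ui]] := Hs y; by exists i.
Qed.

Lemma katok_ge1 (B : X -> set X) (delta : R) : (forall x, dopen d (B x)) ->
  (forall x, B x x) -> 0 <= delta < 1 -> 1 <= katokR mu B delta.
Proof.
move=> oB Bxx /andP[d0 d1]; apply: lb_le_inf.
  by have [E HE] := @katok_ok B delta oB Bxx d1; exists (size E)%:R; exists E.
move=> _ [E HE <-]; case: E HE => [|a E] /=.
  suff -> : \bigcup_(x in [set x | List.In x [::]]) B x = set0.
    by rewrite measure0 lte_fin ltNge d0.
  by apply/seteqP; split => // y [x].
by move=> _; rewrite ler1n.
Qed.

Lemma katok_mono (B1 B2 : X -> set X) (delta : R) : (forall x, dopen d (B1 x)) ->
  (forall x, B1 x x) -> (forall x, dopen d (B2 x)) -> delta < 1 ->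
  (forall x, B1 x `<=` B2 x) -> katokR mu B2 delta <= katokR mu B1 delta.
Proof.
move=> oB1 B1xx oB2 d1 sub; apply: lb_le_inf.
  by have [E HE] := @katok_ok B1 delta oB1 B1xx d1; exists (size E)%:R; exists E.
move=> _ [E HE <-]; apply: ge_inf.
  by exists 0 => _ [F _ <-]; rewrite ler0n.
exists E => //; apply: (lt_le_trans HE); apply: le_measure.
- by rewrite inE; apply: dopen_meas; apply: dopen_bigcup.
- by rewrite inE; apply: dopen_meas; apply: dopen_bigcup.
by move=> y [x Px /sub B2y]; exists x.
Qed.
End K.
Section B.
Variables (R : realType) (X : Type) (d : X -> X -> R) (phi : X -> R -> X).
Hypotheses (hmet : is_metric d) (hflow : is_flow d phi) (hlip : unif_lipschitz d phi).

Lemma ball1_open n x eps : dopen d (bowen_ball_time1 d phi n x eps).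
Proof.
have [d0 dE dC dT] := hmet; have [hc _ _] := hflow.
elim: n => [|n IH] y Hy.
  by exists 1 => // z _ j.
have [e1 e10 He1] : exists2 e, 0 < e & forall z, d y z < e ->
    bowen_ball_time1 d phi n x eps z.
  by apply: IH => j jn; apply: Hy; apply: ltn_trans jn _.
have m0 : 0 < eps - d (phi x n%:R) (phi y n%:R) by rewrite subr_gt0; apply: Hy.
have [eta eta0 Heta] := hc y n%:R _ m0.
exists (Num.min e1 eta); first by rewrite lt_min e10 eta0.
move=> z; rewrite lt_min => /andP[dz1 dz2] j; rewrite ltnS leq_eqVlt => /orP[/eqP ->|jn].
  have := Heta z n%:R dz2; rewrite subrr normr0 => /(_ eta0) h.
  have := dT (phi x n%:R) (phi y n%:R) (phi z n%:R); lra.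
by apply: He1.
Qed.

Lemma g_cont x y : continuous (fun s => d (phi x s) (phi y s)).
Proof.
have [d0 dE dC dT] := hmet; have [hc _ _] := hflow.
move=> s; apply/cvgrPdist_lt => e e0.
have e20 : 0 < e / 2 by rewrite divr_gt0.
have [eta1 eta10 H1] := hc x s _ e20.
have [eta2 eta20 H2] := hc y s _ e20.
apply/nbhs_ballP; exists (Num.min eta1 eta2); first by rewrite /= lt_min eta10 eta20.
move=> s'; rewrite /ball /= lt_min => /andP[h1 h2].
have dxx : d x x = 0 by apply/dE.
have dyy : d y y = 0 by apply/dE.
have := H1 x s'; rewrite dxx => /(_ eta10 h1) a.
have := H2 y s'; rewrite dyy => /(_ eta20 h2) b.
have t1 := dT (phi x s) (phi x s') (phi y s).
have t2 := dT (phi x s') (phi y s') (phi y s).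
have t3 := dT (phi x s') (phi x s) (phi y s').
have t4 := dT (phi x s) (phi y s) (phi y s').
rewrite (dC (phi x s') (phi x s)) in t3.
rewrite (dC (phi y s') (phi y s)) in t2.
rewrite ltr_norml; apply/andP; split; lra.
Qed.

Lemma ballf_open t x eps : dopen d (bowen_ball_flow d phi t x eps).
Proof.
have [d0 dE dC dT] := hmet.
move=> y Hy; have [t0|tneg] := leP 0 t; last first.
  by exists 1 => // z _ s /andP[s0 st]; exfalso; lra.
have [c cI Hc] := @EVT_max R (fun s => d (phi x s) (phi y s)) 0 t t0
  (continuous_subspaceT (g_cont x y)).
have /andP[c0 ct] : 0 <= c <= t by move: cI; rewrite in_itv.
have m0 : 0 < eps - d (phi x c) (phi y c) by rewrite subr_gt0; apply: Hy; rewrite c0.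
have [L' [L0 HL]] := hlip (t + 1) (ltr_pwDr ltr01 t0).
exists ((eps - d (phi x c) (phi y c)) / L'); first by rewrite divr_gt0.
move=> z dz s /andP[s0 st].
have := HL _ y z m0 (ltW dz) s; rewrite s0 /= => /(_ ltac:(lra)) h.
have := Hc s; rewrite in_itv /= s0 st => /(_ isT) h2.
have := dT (phi x s) (phi y s) (phi z s); lra.
Qed.

Lemma incl1 n t x eps : n%:R <= t + 1 ->
  bowen_ball_flow d phi t x eps `<=` bowen_ball_time1 d phi n x eps.
Proof.
move=> nt y Hy j jn; apply: Hy; rewrite ler0n /=.
have : (j.+1)%:R <= n%:R :> R by rewrite ler_nat.
rewrite -addn1 natrD; lra.
Qed.

Lemma incl2 L n t x eps : unif_lip_const d phi 1 L -> 0 < eps -> (1 <= n)%N -> t <= n%:R ->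
  bowen_ball_time1 d phi n x (eps / L) `<=` bowen_ball_flow d phi t x eps.
Proof.
have [_ _ hadd] := hflow.
move=> [L0 HL] e0 n1 tn y Hy s /andP[s0 st].
set j := minn (Num.truncn s) n.-1.
have jn : (j < n)%N by rewrite /j; apply: leq_ltn_trans (geq_minr _ _) _; rewrite prednK.
have js : j%:R <= s.
  have := truncn_le s; rewrite s0 => h; apply: le_trans h.
  by rewrite ler_nat geq_minl.
have sj : s <= j%:R + 1.
  rewrite /j; case: (leqP (Num.truncn s) n.-1) => h.
    apply: ltW.
    have : (Num.truncn s < (Num.truncn s).+1)%N by [].
    by rewrite truncn_lt_nat // -addn1 natrD.
  have : (n.-1.+1)%:R = n%:R :> R by rewrite prednK.
  rewrite -addn1 natrD => ->; lra.
have ex : phi x s = phi (phi x j%:R) (s - j%:R) by rewrite -hadd subrK.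
have ey : phi y s = phi (phi y j%:R) (s - j%:R) by rewrite -hadd subrK.
rewrite ex ey; apply: HL => //.
  by apply: ltW; apply: Hy.
apply/andP; split; lra.
Qed.
End B.

Lemma eoo_of (P : set nat) N : (forall n, (N <= n)%N -> P n) -> \oo P.
Proof. by move=> HN; exists N. Qed.

Lemma eoo_to (P : set nat) : \oo P -> exists N, forall n, (N <= n)%N -> P n.
Proof. by move=> [N _ HN]; exists N => n hn; exact: HN. Qed.

Lemma lnle (R : realType) (a b : R) : 1 <= a -> a <= b -> ln a <= ln b.
Proof.
move=> a1 ab; have a0 : 0 < a by apply: lt_le_trans a1.
by rewrite ler_ln // posrE //; apply: lt_le_trans ab.
Qed.

Lemma divle (R : realType) (p q t x : R) : 0 <= p -> p <= q -> 0 < t -> t <= x ->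
  p / x <= q / t.
Proof.
move=> p0 pq t0 tx; have x0 : 0 < x by apply: lt_le_trans tx.
apply: (@le_trans _ _ (q / x)); first by rewrite ler_wpM2r // invr_ge0 ltW.
by rewrite ler_wpM2l ?lef_pV2 ?posrE //; apply: le_trans pq.
Qed.

Lemma trunc_facts (R : realType) (t : R) : 0 <= t ->
  (Num.truncn t)%:R <= t /\ t < (Num.truncn t).+1%:R.
Proof.
move=> t0; split; first by rewrite truncn_le.
by have := truncn_le_nat t (Num.truncn t); rewrite leqnn.
Qed.

Lemma trunc_ge (R : realType) (t : R) N : N%:R < t -> (N <= Num.truncn t)%N.
Proof.
move=> Nt; have t0 : 0 <= t by apply: le_trans (ltW Nt).
by rewrite leqNgt truncn_lt_nat // -leNgt ltW.
Qed.

Lemma exN (R : realType) (M : R) : exists N : nat, M < N%:R.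
Proof.
exists (Num.truncn `|M|).+1; have [_ h] := @trunc_facts R _ (normr_ge0 M).
by apply: le_lt_trans h; apply: ler_norm.
Qed.

Lemma limn_einfE (R : realType) (u : nat -> \bar R) : limn_einf u = limf_einf u \oo.
Proof. by []. Qed.

Theorem proposition3p2 (R : realType) (dX : measure_display) (X : measurableType dX)
  (d : X -> X -> R) (phi : X -> R -> X) (L : R) (mu : probability X R) :
  is_metric d -> dcompact d -> borel_for d ->
  is_flow d phi -> unif_lipschitz d phi -> unif_lip_const d phi 1 L ->
  forall delta eps : R, 0 < delta < 1 -> 0 < eps ->
  ((katok_upper_time1 mu d phi eps delta <= katok_upper_flow mu d phi eps delta)%E /\
   (katok_upper_flow mu d phi eps delta <= katok_upper_time1 mu d phi (eps / L) delta)%E) /\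
  ((katok_lower_time1 mu d phi eps delta <= katok_lower_flow mu d phi eps delta)%E /\
   (katok_lower_flow mu d phi eps delta <= katok_lower_time1 mu d phi (eps / L) delta)%E).
Proof.
move=> hmet hcomp hbor hflow hlip hL delta eps /andP[d0 d1] e0.
have [dp dE dC dT] := hmet.
have [L0 _] := hL.
have eL0 : 0 < eps / L by rewrite divr_gt0.
have dxx : forall x, d x x = 0 by move=> x; apply/dE.
set af := fun t => katokR mu (fun x => bowen_ball_flow d phi t x eps) delta.
set a1 := fun n => katokR mu (fun x => bowen_ball_time1 d phi n x eps) delta.
set c := fun n => katokR mu (fun x => bowen_ball_time1 d phi n x (eps / L)) delta.
have d01 : 0 <= delta < 1 by rewrite (ltW d0) d1.
have reff : forall t x, bowen_ball_flow d phi t x eps x by move=> t x s _; rewrite dxx.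
have ref1 : forall n e, 0 < e -> forall x, bowen_ball_time1 d phi n x e x
  by move=> n e ep x j _; rewrite dxx.
have af1 : forall t, 1 <= af t.
  by move=> t; apply: (@katok_ge1 _ _ _ d _ hcomp) => // x; apply: (@ballf_open _ _ _ _ hmet hflow hlip).
have a11 : forall n, 1 <= a1 n.
  by move=> n; apply: (@katok_ge1 _ _ _ d _ hcomp) => // x; [apply: (@ball1_open _ _ _ _ hmet hflow) | apply: ref1].
have c1 : forall n, 1 <= c n.
  by move=> n; apply: (@katok_ge1 _ _ _ d _ hcomp) => // x; [apply: (@ball1_open _ _ _ _ hmet hflow) | apply: ref1].
have F1 : forall n t, n%:R <= t + 1 -> a1 n <= af t.
  move=> n t nt; apply: (@katok_mono _ _ _ d _ hcomp hbor) => // x.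
  - exact: (@ballf_open _ _ _ _ hmet hflow hlip).
  - exact: (@ball1_open _ _ _ _ hmet hflow).
  - exact: (@incl1 _ _ _ _).
have F2 : forall n t, (1 <= n)%N -> t <= n%:R -> af t <= c n.
  move=> n t n1 tn; apply: (@katok_mono _ _ _ d _ hcomp hbor) => // x.
  - exact: (@ball1_open _ _ _ _ hmet hflow).
  - exact: ref1.
  - exact: (@ballf_open _ _ _ _ hmet hflow hlip).
  - exact: (@incl2 _ _ _ _ hflow).
have lnaf : forall t, 0 <= ln (af t) by move=> t; apply: ln_ge0.
have lnc : forall n, 0 <= ln (c n) by move=> n; apply: ln_ge0.
split; split.
-
  rewrite /katok_upper_time1 /katok_upper_flow /limn_esup.
  apply: esup_cmp => V [M [Mr HM]].
  have [N HN] := @exN R M.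
  exists [set n : nat | M < n%:R].
    apply: (@eoo_of _ N) => n Nn /=; apply: lt_le_trans HN _; by rewrite ler_nat.
  move=> n /= Mn; exists n%:R; first exact: HM.
  rewrite lee_fin ler_wpM2r ?invr_ge0 ?ler0n //; apply: lnle; first exact: a11.
  by apply: F1; lra.
-
  rewrite /katok_upper_flow /katok_upper_time1 /limn_esup.
  set g := (fun n : nat => _).
  set l := limf_esup g \oo.
  have l0 : (0 <= l)%E.
    apply: limf_esup_ge0.
      by move=> /eoo_to [N HN]; exact: (HN N (leqnn N)).
    by move=> n; rewrite /g /= lee_fin; apply: divr_ge0 (lnc n) (ler0n _ _).
  apply/lee_addgt0Pr => e ep.
  move: l0; case El: l => [r| |] l0.
  + have : (l < (r + e / 2)%:E)%E by rewrite El lte_fin; lra.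
    rewrite /l limf_esupE => /ereal_inf_lt [_ [V HV <-] HVlt].
    have [N HN] := @eoo_to V HV.
    set q := r + e / 2.
    have gb : forall n, (N <= n)%N -> ln (c n) / n%:R <= q.
      move=> n Nn; rewrite -lee_fin; apply: le_trans (ltW HVlt).
      by apply: ereal_sup_ubound; exists n => //; apply: HN.
    have r0 : 0 <= r by rewrite -lee_fin.
    have q0 : 0 < q by rewrite /q; lra.
    have qe0 : 0 <= 2 * q / e by rewrite divr_ge0 // ?mulr_ge0 // ltW.
    apply: le_trans (ereal_inf_lbound _) _.
      exists [set t | N%:R + 2 * q / e < t] => //.
      by exists (N%:R + 2 * q / e); split => //; apply: num_real.
    apply: ge_ereal_sup => _ [t /= Wt <-].
    have Nt : N%:R < t by have := ler0n R N; lra.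
    have qt : 2 * q / e < t by have := ler0n R N; lra.
    have t0 : 0 < t by lra.
    have [tl tu] := @trunc_facts R t (ltW t0).
    have Nn : (N <= (Num.truncn t).+1)%N by apply: leqW; apply: trunc_ge.
    have h1 : ln (af t) <= ln (c (Num.truncn t).+1).
      by apply: lnle; [exact: af1 | apply: F2 => //; exact: ltW].
    have h2 := gb _ Nn.
    rewrite ler_pdivrMr ?ltr0n // in h2.
    have h3 : (Num.truncn t).+1%:R <= t + 1 by rewrite -addn1 natrD; lra.
    have h4 : q * (Num.truncn t).+1%:R <= q * (t + 1) by rewrite ler_wpM2l // ltW.
    rewrite ltr_pdivrMr // in qt.
    rewrite -EFinD lee_fin ler_pdivrMr //.
    have h5 : (r + e) * t = q * t + (e / 2) * t by rewrite /q; field.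
    have h6 : q * (t + 1) = q * t + q by ring.
    have : q <= e / 2 * t by lra.
    lra.
  + by rewrite leey.
  + by move: l0; rewrite leNgt ltNy0.
-
  rewrite /katok_lower_time1 /katok_lower_flow limn_einfE.
  apply: einf_cmp => U /eoo_to [N HN].
  exists [set t | N%:R < t].
    by exists N%:R; split => //; apply: num_real.
  move=> t /= Nt; have t0 : 0 < t by apply: le_lt_trans Nt.
  have [tl tu] := @trunc_facts R t (ltW t0).
  exists (Num.truncn t).+1; first by apply: HN; apply: leqW; apply: trunc_ge.
  rewrite lee_fin; apply: divle.
  + exact: ln_ge0 (a11 _).
  + apply: lnle; first exact: a11.
    by apply: F1; rewrite -addn1 natrD; lra.
  + exact: t0.
  + exact: ltW.
-
  rewrite /katok_lower_time1 /katok_lower_flow limn_einfE.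
  apply: einf_cmp => U [M [Mr HM]].
  have [N HN] := @exN R M.
  exists [set n : nat | M < n%:R /\ (1 <= n)%N].
    apply: (@eoo_of _ N.+1) => n Nn /=; split => //.
      by apply: lt_le_trans HN _; rewrite ler_nat ltnW.
    by apply: leq_trans Nn.
  move=> n [Mn n1]; exists n%:R; first exact: HM.
  rewrite lee_fin ler_wpM2r ?invr_ge0 ?ler0n //; apply: lnle; first exact: af1.
  by apply: F2.
Qed.
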